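(* Let $m,k,d$ be positive integers with $d\ge k$, and let $a_1,\dots,a_k$ be positive integers with $a_1+\dots+a_k\le m$. Let $S$ be a uniformly random subset of $[m]$ of size $d$. Among all families $\{A_1,\dots,A_k\}$ of subsets of $[m]$ with $|A_i|=a_i$ for each $i$, the probability $$\mathbb P\big(\{S\cap A_1,\dots,S\cap A_k\}\text{ has a system of distinct representatives}\big)$$ is maximised when the sets $A_1,\dots,A_k$ are mutually disjoint.
   Context: A system of distinct representatives for sets $B_1,\dots,B_k$ is a choice of elements $b_i\in B_i$ with $b_1,\dots,b_k$ pairwise distinct. *)

(* Defs.v *)
From HB Require Import structures.
From mathcomp Require Import all_boot all_order all_algebra.
Set Implicit Arguments. Unset Strict Implicit. Unset Printing Implicit Defensive.
Import Order.TTheory GRing.Theory Num.Theory.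

Definition has_sdr (T : finType) (k : nat) (B : 'I_k -> {set T}) : bool :=
  [exists f : {ffun 'I_k -> T}, injectiveb f && [forall i, f i \in B i]].

Definition sdr_prob (m k d : nat) (A : 'I_k -> {set 'I_m}) : rat :=
  (#|[set S : {set 'I_m} | (#|S| == d) && has_sdr (fun i => S :&: A i)]|%:R
     / 'C(m, d)%:R)%R.

(* Main.v *)
Require Import Defs.
From HB Require Import structures.
From mathcomp Require Import all_boot all_order all_algebra all_fingroup zify.
From Stdlib Require Import FunctionalExtensionality.
Import Order.TTheory GRing.Theory Num.Theory.
Set Implicit Arguments. Unset Strict Implicit.

Lemma mk_sdr (T : finType) k (C : 'I_k -> {set T}) (f : 'I_k -> T) :
  injective f -> (forall i, f i \in C i) -> has_sdr C.
Proof.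
move=> inj Hf; apply/existsP; exists (finfun f); apply/andP; split.
  by apply/injectiveP => i j; rewrite !ffunE; apply: inj.
by apply/forallP => i; rewrite ffunE.
Qed.

Lemma get_sdr (T : finType) k (C : 'I_k -> {set T}) :
  has_sdr C -> exists f : 'I_k -> T, injective f /\ (forall i, f i \in C i).
Proof.
case/existsP => f /andP [/injectiveP inj /forallP H]; by exists f.
Qed.

Definition G m k d (A : 'I_k -> {set 'I_m}) :=
  [set S : {set 'I_m} | (#|S| == d) && has_sdr (fun i => S :&: A i)].

Definition upd m k (A : 'I_k -> {set 'I_m}) j x y :=
  fun q => if q == j then y |: (A j :\ x) else A q.

Lemma upd_sdr m k (A : 'I_k -> {set 'I_m}) j x y (S U : {set 'I_m}) (f : 'I_k -> 'I_m) :
  injective f -> (forall q, f q \in S :&: A q) -> y \in U ->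
  (forall q, q != j -> f q \in U) -> (forall q, y \notin A q) ->
  has_sdr (fun q => U :&: upd A j x y q).
Proof.
move=> inj Hf yU fU yA.
apply: (@mk_sdr _ _ _ (fun q => if q == j then y else f q)).
  move=> a b /=; case: eqP => [->|na]; case: eqP => [->|nb] //.
  - by move=> E; move: (yA b) (Hf b); rewrite -E inE => /negP nyb /andP [_ /nyb].
  - by move=> E; move: (yA a) (Hf a); rewrite E inE => /negP nyb /andP [_ /nyb].
  - exact: inj.
move=> q /=; rewrite /upd; case: ifP => [_|/negbT nq]; first by rewrite !inE eqxx yU.
rewrite inE fU //.
by have := Hf q; rewrite inE => /andP [].
Qed.

Lemma keep_sdr m k (A : 'I_k -> {set 'I_m}) j x y (S : {set 'I_m}) (f : 'I_k -> 'I_m) :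
  injective f -> (forall q, f q \in S :&: A q) -> f j != x ->
  has_sdr (fun q => S :&: upd A j x y q).
Proof.
move=> inj Hf fx; apply: (mk_sdr inj) => q; rewrite /upd.
case: eqP => [->|_] //; have := Hf j; rewrite !inE fx => /andP [-> ->].
by rewrite orbT.
Qed.

Lemma card_move (T : finType) (S : {set T}) x y :
  x \in S -> y \notin S -> #|y |: (S :\ x)| = #|S|.
Proof.
move=> xS yS; rewrite cardsU1 (cardsD1 x S) xS !inE negb_and yS orbT.
by [].
Qed.

Lemma move_le m k d (A : 'I_k -> {set 'I_m}) j x y :
  x \in A j -> (forall q, y \notin A q) -> #|G d A| <= #|G d (upd A j x y)|.
Proof.
move=> xA yA.
set GA := G d A; set GB := G d (upd A j x y).
have bad : forall S, S \in GA :\: GB ->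
   [/\ x \in S, y \notin S, #|S| = d,
    (forall f : 'I_k -> 'I_m, injective f -> (forall q, f q \in S :&: A q) -> f j = x)
    & exists f : 'I_k -> 'I_m, injective f /\ (forall q, f q \in S :&: A q)].
  move=> S; rewrite !inE => /andP [nB /andP [/eqP cS hA]].
  have allx : forall f : 'I_k -> 'I_m, injective f -> (forall q, f q \in S :&: A q) -> f j = x.
    move=> f inj Hf; apply/eqP; apply: contraNT nB => fx.
    by rewrite cS eqxx /= (keep_sdr y inj Hf fx).
  have [f [inj Hf]] := get_sdr hA.
  split => //; last by exists f.
  - by have := Hf j; rewrite (allx f inj Hf) inE => /andP [].
  - apply: contra nB => yS; rewrite cS eqxx /=.
    apply: (upd_sdr x inj Hf) => // q _.
    by have := Hf q; rewrite inE => /andP [].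
pose h := fun S : {set 'I_m} => y |: (S :\ x).
have hinj : {in GA :\: GB &, injective h}.
  move=> S1 S2 /bad [x1 y1 _ _ _] /bad [x2 y2 _ _ _] /setP E; apply/setP => z.
  have := E z; rewrite /h !inE.
  case: (eqVneq z x) => [->|zx]; first by rewrite x1 x2.
  case: (eqVneq z y) => [->|zy]; first by rewrite (negbTE y1) (negbTE y2).
  by [].
have sub : h @: (GA :\: GB) \subset GB :\: GA.
  apply/subsetP => T /imsetP [S /bad [xS yS cS allx [f [inj Hf]]] ->].
  rewrite /GA /GB /G !inE /h card_move // cS eqxx /=.
  apply/andP; split.
    apply/negP => /get_sdr [g [ginj Hg]].
    have gS : forall q, g q \in S :&: A q.
      move=> q; have := Hg q; rewrite !inE => /andP [/orP [/eqP gy|/andP [_ ->]] ->] //.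
      by have := yA q; rewrite -gy; have := Hg q; rewrite inE => /andP [_ ->].
    have gj := allx g ginj gS.
    by have := Hg j; rewrite !inE gj eqxx /= => /andP [/orP [/eqP xy|//] _]; move: yS; rewrite -xy xS.
  apply: (upd_sdr x inj Hf) => //; first by rewrite !inE eqxx.
  move=> q nq; rewrite !inE; have := Hf q; rewrite inE => /andP [-> _].
  rewrite andbT -(allx f inj Hf); apply/orP; right.
  by apply: contra nq => /eqP /inj ->.
rewrite -(cardsID GB GA) -(cardsID GA GB) setIC leq_add2l.
by rewrite -(card_in_imset hinj) subset_leq_card.
Qed.

Lemma perm_le m k d (A : 'I_k -> {set 'I_m}) (p : {perm 'I_m}) :
  #|G d A| <= #|G d (fun q => p @: A q)|.
Proof.
rewrite -(card_imset (G d A) (imset_inj (@perm_inj _ p))).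
apply: subset_leq_card; apply/subsetP => T /imsetP [S].
rewrite !inE => /andP [cS /get_sdr [f [inj Hf]]] ->.
rewrite card_imset ?cS /=; last exact: perm_inj.
apply: (@mk_sdr _ _ _ (fun q => p (f q))).
  by move=> a b /perm_inj /inj.
move=> q; have := Hf q; rewrite !inE => /andP [h1 h2].
by rewrite !imset_f.
Qed.

Definition disb m k (A : 'I_k -> {set 'I_m}) :=
  [forall i, forall l, forall z, (z \in A i) && (z \in A l) ==> (i == l)].

Lemma disbP m k (A : 'I_k -> {set 'I_m}) i l z :
  disb A -> z \in A i -> z \in A l -> i = l.
Proof.
by move=> /forallP /(_ i) /forallP /(_ l) /forallP /(_ z) /implyP H zi zl; apply/eqP/H; rewrite zi.
Qed.

Lemma bigcup_card (T I : finType) (P : pred I) (F : I -> {set T}) :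
  #|\bigcup_(i | P i) F i| <= \sum_(i | P i) #|F i|.
Proof.
elim/big_rec2: _ => [|i x y _ H]; first by rewrite cards0.
apply: leq_trans (leq_add (leqnn _) H); exact: (leq_card_setU _ _).1.
Qed.

Lemma nd_step m k d (A : 'I_k -> {set 'I_m}) :
  ~~ disb A -> \sum_q #|A q| <= m ->
  exists A' : 'I_k -> {set 'I_m}, (forall q, #|A' q| = #|A q|) /\
    #|\bigcup_q A q| < #|\bigcup_q A' q| /\ #|G d A| <= #|G d A'|.
Proof.
move=> /forallPn [i] /forallPn [l] /forallPn [z]; rewrite negb_imply.
move=> /andP [/andP [zi zl] il] hs.
have lt : #|\bigcup_q A q| < \sum_q #|A q|.
  rewrite (bigD1 i) //= [X in _ < X](bigD1 i) //= cardsU.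
  set U := \bigcup_(q | q != i) A q.
  have h1 : 0 < #|A i :&: U|.
    apply/card_gt0P; exists z; rewrite inE zi /=.
    by apply/bigcupP; exists l => //; rewrite eq_sym.
  have h2 : #|A i :&: U| <= #|A i| by apply: subset_leq_card; apply: subsetIl.
  have h3 : #|U| <= \sum_(q < k | q != i) #|A q| by apply: bigcup_card.
  have ar : forall a u c s, 0 < c -> c <= a -> u <= s -> a + u - c < a + s by move=> *; lia.
  exact: ar h1 h2 h3.
have [y _ yn] : exists2 y, y \in [set: 'I_m] & y \notin \bigcup_q A q.
  apply/subsetPn; apply/negP => /subset_leq_card; rewrite cardsT card_ord; lia.
have yA : forall q, y \notin A q.
  by move=> q; apply: contra yn => yq; apply/bigcupP; exists q.
exists (upd A l z y); split; last split.
- move=> q; rewrite /upd; case: ifP => [/eqP -> |//].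
  by rewrite card_move // !inE negb_and yA orbT.
- apply: proper_card; apply/properP; split.
    apply/subsetP => w /bigcupP [q _ wq].
    case: (eqVneq q l) => [ql|nql].
      case: (eqVneq w z) => [wz|nwz].
        apply/bigcupP; exists i => //; rewrite /upd.
        by case: ifP => [/eqP il'|_]; [move: il; rewrite il' eqxx | rewrite wz].
      apply/bigcupP; exists l => //; rewrite /upd eqxx !inE nwz /=.
      by move: wq; rewrite ql => ->; rewrite orbT.
    apply/bigcupP; exists q => //; rewrite /upd.
    by case: ifP => [/eqP E|//]; move: nql; rewrite E eqxx.
  exists y => //; apply/bigcupP; exists l => //; rewrite /upd eqxx !inE eqxx.
  by [].
- exact: move_le.
Qed.

Lemma step1 m k d n (A : 'I_k -> {set 'I_m}) :
  m - #|\bigcup_q A q| <= n -> \sum_q #|A q| <= m ->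
  exists A' : 'I_k -> {set 'I_m}, disb A' /\ (forall q, #|A' q| = #|A q|) /\
     #|G d A| <= #|G d A'|.
Proof.
elim: n A => [|n IH] A hn hs.
  case: (boolP (disb A)) => [D|ND]; first by exists A.
  have [A' [_ [lt _]]] := nd_step d ND hs.
  have : #|\bigcup_q A' q| <= m by apply: leq_trans (max_card _) _; rewrite card_ord.
  lia.
case: (boolP (disb A)) => [D|ND]; first by exists A.
have [A' [c' [lt le']]] := nd_step d ND hs.
have hm' : #|\bigcup_q A' q| <= m by apply: leq_trans (max_card _) _; rewrite card_ord.
have hs' : \sum_q #|A' q| <= m.
  by rewrite (eq_bigr _ (fun q _ => c' q)).
have [A'' [D'' [c'' le'']]] := IH A' ltac:(lia) hs'.
exists A''; split => //; split; first by move=> q; rewrite c'' c'.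
exact: leq_trans le''.
Qed.

Lemma swap_step m k (A B : 'I_k -> {set 'I_m}) j :
  disb A -> disb B -> (forall q, #|A q| = #|B q|) -> A j != B j ->
  exists p : {perm 'I_m},
    disb (fun q => p @: A q) /\ (forall q, #|p @: A q| = #|B q|) /\
    \sum_q #|A q :&: B q| < \sum_q #|p @: A q :&: B q|.
Proof.
move=> dA dB hc ne.
have [x xA xB] : exists2 x, x \in A j & x \notin B j.
  apply/subsetPn; apply: contra ne => sAB; rewrite eqEcard sAB hc leqnn.
  by [].
have [y yB yA] : exists2 y, y \in B j & y \notin A j.
  apply/subsetPn; apply: contra ne => sBA; rewrite eq_sym eqEcard sBA hc leqnn.
  by [].
exists (tperm x y); split; last split.
- apply/forallP => i; apply/forallP => l; apply/forallP => z; apply/implyP.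
  case/andP => /imsetP [w wi ->] /imsetP [w' wl /perm_inj E].
  by apply/eqP; apply: (disbP dA wi); rewrite E.
- by move=> q; rewrite card_imset ?hc //; apply: perm_inj.
have sub : forall q, A q :&: B q \subset tperm x y @: A q :&: B q.
  move=> q; apply/subsetP => w; rewrite !inE => /andP [wA wB]; rewrite wB andbT.
  have wx : x != w.
    apply/eqP => E; move: wA wB; rewrite -E => xAq xBq.
    by move: xB; rewrite (disbP dA xA xAq) xBq.
  have wy : y != w.
    apply/eqP => E; move: wA wB; rewrite -E => yAq yBq.
    by move: yA; rewrite (disbP dB yB yBq) yAq.
  by rewrite -(tpermD wx wy) imset_f.
have lt : #|A j :&: B j| < #|tperm x y @: A j :&: B j|.
  apply: proper_card; apply/properP; split; first exact: sub.
  by exists y; rewrite !inE ?yB ?andbT ?(negbTE yA) //; rewrite -{1}(tpermL x y) imset_f.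
rewrite (bigD1 j) //= [X in _ < X](bigD1 j) //= -addSn.
apply: leq_add lt _; apply: leq_sum => q _; exact: subset_leq_card (sub q).
Qed.

Lemma step2 m k d n (A B : 'I_k -> {set 'I_m}) :
  disb A -> disb B -> (forall q, #|A q| = #|B q|) ->
  \sum_q #|B q| - \sum_q #|A q :&: B q| <= n -> #|G d A| <= #|G d B|.
Proof.
elim: n A => [|n IH] A dA dB hc hn.
  case: (boolP [forall q, A q == B q]) => [/forallP E|/forallPn [j ne]].
    have -> : A = B by apply: functional_extensionality => q; apply/eqP.
    by [].
  have [p [_ [_ lt]]] := swap_step dA dB hc ne.
  have : \sum_q #|p @: A q :&: B q| <= \sum_q #|B q|.
    by apply: leq_sum => q _; apply: subset_leq_card; apply: subsetIr.
  lia.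
case: (boolP [forall q, A q == B q]) => [/forallP E|/forallPn [j ne]].
  have -> : A = B by apply: functional_extensionality => q; apply/eqP.
  by [].
have [p [dp [hp lt]]] := swap_step dA dB hc ne.
have : \sum_q #|p @: A q :&: B q| <= \sum_q #|B q|.
  by apply: leq_sum => q _; apply: subset_leq_card; apply: subsetIr.
move=> hb.
apply: leq_trans (perm_le d A p) _.
apply: IH => //; lia.
Qed.

Theorem mainTheorem10 (m k d : nat) (a : 'I_k -> nat)
  (hm : 0 < m) (hk : 0 < k) (hd : 0 < d) (hdk : k <= d)
  (ha : forall i, 0 < a i) (hsum : \sum_(i < k) a i <= m)
  (A B : 'I_k -> {set 'I_m})
  (hA : forall i, #|A i| = a i) (hB : forall i, #|B i| = a i)
  (hBdisj : forall i j, i != j -> [disjoint B i & B j]) :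
  (sdr_prob d A <= sdr_prob d B)%R.
Proof.
have dB : disb B.
  apply/forallP => i; apply/forallP => l; apply/forallP => z; apply/implyP.
  case/andP => zi zl; apply/negPn/negP => il.
  by rewrite (disjointFr (hBdisj i l il) zi) in zl.
have hs : \sum_q #|A q| <= m by rewrite (eq_bigr _ (fun q _ => hA q)).
have [A' [dA' [cA' le1]]] := step1 d (leqnn _) hs.
have le2 : #|G d A'| <= #|G d B|.
  apply: (@step2 _ _ d (\sum_q #|B q|)) => //; last exact: leq_subr.
  by move=> q; rewrite cA' hA hB.
rewrite /sdr_prob; apply: ler_wpM2r; first by rewrite invr_ge0 ler0n.
rewrite ler_nat; exact: leq_trans le1 le2.
Qed.
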